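(* Let $n\geq 2$. (1) For any $\tau\in S_{n-1}$ and any $I\sqcup J=[2,n]$, there exists $\sigma\in S_n$ such that $A^\sigma_{[2,n],\emptyset}=A^\tau_{I,J}$. (2) For any $\sigma\in S_{n-1}$, the only triple $(\tau,I,J)$ with $\tau\in S_{n-1}$, $I\sqcup J=[2,n]$ and $A^\tau_{I,J}=A^\sigma_{[2,n],\emptyset}$ is $\tau=\sigma$, $I=[2,n]$, $J=\emptyset$. (3) For any $\sigma\in S_{n-1}(1,i)$ with $2\leq i\leq n$, the complete list of triples $(\tau,I,J)$ with $\tau\in S_{n-1}$, $I\sqcup J=[2,n]$ and $A^\tau_{I,J}=A^\sigma_{[2,n],\emptyset}$ is indexed by the sequences $2\leq m_1<\dots<m_{i-1}\leq n$, and is given by $$\tau=\sigma C_{m_{i-1}}^{-1}\cdots C_{m_1}^{-1},\quad I=[2,n]\setminus\{m_1,\dots,m_{i-1}\},\quad J=\{m_1,\dots,m_{i-1}\}.$$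
   Context: Let $w_{ij}$, $1\leq i,j\leq n$, be formal variables subject only to $w_{ij}+w_{ji}=0$ (so they span a free abelian group with basis $w_{ij}$, $i<j$). Let $[2,n]=\{2,\dots,n\}$. For $\sigma\in S_n$ and a disjoint decomposition $I\sqcup J=[2,n]$, set $$A^\sigma_{I,J}:=\sum_{i\in I}\sum_{\ell=1}^{i-1}w_{\sigma(\ell)\sigma(i)}-\sum_{j\in J}\sum_{\ell=1}^{j-1}w_{\sigma(\ell)\sigma(j)}.$$ Permutations are composed right-to-left: $(\sigma\tau)(k)=\sigma(\tau(k))$. $S_{n-1}\subset S_n$ is the subgroup of $\tau$ with $\tau(1)=1$, $S_{n-1}(1,i)=\{\tau\cdot(1,i):\tau\in S_{n-1}\}$, and for $m\geq 2$, $C_m$ is the cycle $(1,m,m-1,\dots,2)$. *)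

(* Defs.v *)
(* Indices are 0-based: paper index k in [1,n] is the ordinal
   k-1 : 'I_n.  In particular [2,n] is the set of ordinals with value >= 1,
   S_{n-1} is the stabilizer of the ordinal 0, etc. *)
From HB Require Import structures.
From mathcomp Require Import all_boot all_order all_fingroup all_algebra.
From mathcomp Require Import zify.
Set Implicit Arguments.
Unset Strict Implicit.
Unset Printing Implicit Defensive.
Import GRing.Theory.
Local Open Scope ring_scope.

Section Defs.
Variable n : nat.

(* The free abelian group on w_ab (a<b): integer coefficient vectors indexed
   by pairs; only entries (a,b) with a<b are ever nonzero. *)
Definition wgrp := {ffun 'I_n * 'I_n -> int}.

(* w a b, with w a b + w b a = 0 (and hence w a a = 0). *)
Definition w (a b : 'I_n) : wgrp :=
  [ffun p : 'I_n * 'I_n =>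
     if (p.1 == a) && (p.2 == b) && (a < b)%N then 1
     else if (p.1 == b) && (p.2 == a) && (b < a)%N then -1 else 0].

(* A^sigma_{I,J}; the paper's l in [1, i-1] is the ordinal l < i. *)
Definition A (s : 'S_n) (I J : {set 'I_n}) : wgrp :=
  \sum_(i in I) \sum_(l : 'I_n | (l < i)%N) w (s l) (s i)
  - \sum_(j in J) \sum_(l : 'I_n | (l < j)%N) w (s l) (s j).

Definition I2n : {set 'I_n} := [set k : 'I_n | (0 < k)%N].

Definition is_split (I J : {set 'I_n}) : Prop :=
  I :&: J = set0 /\ I :|: J = I2n.

Definition inS1 (s : 'S_n) : Prop :=
  forall k : 'I_n, nat_of_ord k = 0%N -> nat_of_ord (s k) = 0%N.

(* paper's composition (sigma tau)(k) = sigma (tau k); mathcomp's perm product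
   is left-to-right, so this is (t * s)%g *)
Definition permc (s t : 'S_n) : 'S_n := (t * s)%g.

(* The cycle C_m = (1, m, m-1, ..., 2), for the ordinal m (paper's m is m+1):
   0 |-> m, k |-> k-1 for 1 <= k <= m, other k fixed. *)
Definition cycf (m k : 'I_n) : 'I_n :=
  if nat_of_ord k == 0%N then m
  else if (nat_of_ord k <= nat_of_ord m)%N
       then Ordinal (leq_ltn_trans (leq_pred k) (ltn_ord k))
       else k.

Lemma cycf_inj (m : 'I_n) : injective (cycf m).
Proof.
move=> x y; rewrite /cycf => H; apply: val_inj.
have := congr1 val H.
case: eqP => Hx; case: eqP => Hy => //=;
  repeat case: ifP => //= ; lia.
Qed.

Definition C (m : 'I_n) : 'S_n := perm (@cycf_inj m).

(* For l = [:: m_1; ...; m_k], Cinvs l = C_{m_k}^{-1} ... C_{m_1}^{-1}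
   (paper's composition order). *)
Definition Cinvs (l : seq 'I_n) : 'S_n :=
  foldr (fun m acc => permc acc (C m)^-1%g) 1%g l.

End Defs.

(* Main.v *)
Require Import Defs.
From HB Require Import structures.
From mathcomp Require Import all_boot all_order all_fingroup all_algebra.
From mathcomp Require Import zify.
Set Implicit Arguments.
Unset Strict Implicit.
Unset Printing Implicit Defensive.
Import GRing.Theory Num.Theory Order.TTheory.
Local Open Scope ring_scope.

Section Aux.
Variable n : nat.
Implicit Types (f g : 'I_n -> int) (p : 'S_n).

Definition rk f (x : 'I_n) : nat := #|[set y | f y < f x]|.

Lemma rk_ext f g : (forall x y, (f x < f y) = (g x < g y)) -> forall x, rk f x = rk g x.
Proof. by move=> H x; rewrite /rk; apply: eq_card=> y; rewrite !inE H. Qed.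

Lemma rk_mono f : injective f -> forall x y, (f x < f y) = (rk f x < rk f y)%N.
Proof.
move=> injf x y; case: (ltrP (f x) (f y)) => Hxy.
  apply/esym/proper_card/properP; split.
    apply/subsetP=> z; rewrite !inE => Hz; exact: lt_trans Hz Hxy.
  by exists x; rewrite !inE ?Hxy ?ltxx.
apply/esym/negbTE; rewrite -leqNgt; apply: subset_leq_card; apply/subsetP=> z.
rewrite !inE => Hz; exact: lt_le_trans Hz Hxy.
Qed.

Lemma rk_lt f x : (rk f x < n)%N.
Proof.
rewrite /rk; have H : [set y | f y < f x] \subset [set~ x].
  by apply/subsetP=> z; rewrite !inE; apply: contraTneq => ->; rewrite ltxx.
apply: leq_ltn_trans (subset_leq_card H) _; rewrite cardsC1 card_ord.
by case: n x {H} => [[]|m].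
Qed.

Lemma rk_inj f : injective f -> injective (rk f).
Proof.
move=> injf x y H; apply: (injf).

case: (ltgtP (f x) (f y)) => //; rewrite (rk_mono injf) H ltnn //.
Qed.

Lemma rk_comp f p x : rk (fun y => f (p y)) x = rk f (p x).
Proof.
rewrite /rk -(@card_preimset _ p [set z | f z < f (p x)] (@perm_inj _ p)).
by apply: eq_card=> y; rewrite !inE.
Qed.

Lemma card_ltord (v : nat) : (v <= n)%N -> #|[set y : 'I_n | (y < v)%N]| = v.
Proof.
move=> Hv.
have -> : [set y : 'I_n | (y < v)%N] = [set widen_ord Hv j | j : 'I_v].
  apply/setP=> y; rewrite !inE; apply/idP/imsetP.
    by move=> Hy; exists (Ordinal Hy) => //; apply: val_inj.
  by case=> j _ ->; rewrite /= ltn_ord.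
by rewrite card_imset ?card_ord // => a b /(congr1 val) /= /val_inj.
Qed.

Lemma rk_perm p x : rk (fun y => (p y)%:Z) x = p x.
Proof.
rewrite /rk -[RHS](@card_ltord (p x)); last exact: ltnW.
rewrite -(@card_preimset _ p [set z : 'I_n | (z < p x)%N] (@perm_inj _ p)).
by apply: eq_card=> y; rewrite !inE ltz_nat.
Qed.

End Aux.
Section Aux2.
Variable n : nat.
Implicit Types (f g : 'I_n -> int) (p : 'S_n).

Definition kap (J : {set 'I_n}) (k : 'I_n) : int :=
  if k \in J then - ((k : nat)%:Z) else (k : nat)%:Z.
Definition eps (I J : {set 'I_n}) (k : 'I_n) : int :=
  if k \in I then 1 else if k \in J then -1 else 0.
Definition T f : wgrp n :=
  [ffun q : 'I_n * 'I_n => if (q.1 < q.2)%N then (if f q.1 < f q.2 then 1 else -1) else 0].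

Lemma split_mem (I J : {set 'I_n}) (k : 'I_n) : is_split I J ->
  ((k \in I) || (k \in J)) = (0 < k)%N /\ ~~ ((k \in I) && (k \in J)).
Proof.
case=> H1 H2; split.
  by rewrite -in_setU H2 /I2n inE.
by rewrite -in_setI H1 inE.
Qed.

Lemma sign_lemma (I J : {set 'I_n}) (a b : 'I_n) : is_split I J -> a != b ->
  eps I J b * (if (a < b)%N then 1 else 0) - eps I J a * (if (b < a)%N then 1 else 0)
  = if kap J a < kap J b then 1 else -1.
Proof.
move=> HS Hab.
have [Ha1 Ha2] := split_mem a HS; have [Hb1 Hb2] := split_mem b HS.
have Hv : (a : nat) <> b by move=> E; move/eqP: Hab; apply; apply: val_inj.
rewrite /eps /kap.
move: Ha1 Ha2 Hb1 Hb2.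
case: (a \in I); case: (a \in J); case: (b \in I); case: (b \in J) => //= Ha1 _ Hb1 _;
case: ltnP => h1; case: ltnP => h2; case: ltrP => h3; lia.
Qed.

Lemma sum2_delta (F : 'I_n -> 'I_n -> int) (a b : 'I_n) :
  \sum_y \sum_x (if (x == a) && (y == b) then F x y else 0) = F a b.
Proof.
rewrite (bigD1 b) //= [X in _ + X]big1 ?addr0; last first.
  by move=> y Hy; apply: big1 => x _; rewrite (negbTE Hy) andbF.
rewrite (bigD1 a) //= [X in _ + X]big1 ?addr0 ?eqxx //.
by move=> x Hx; rewrite (negbTE Hx).
Qed.

Lemma wE (x y a b : 'I_n) : (a < b)%N ->
  w x y (a, b) = (if (x == a) && (y == b) then 1 else 0) - (if (x == b) && (y == a) then 1 else 0).
Proof.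
move=> hab; rewrite /w ffunE /= -!val_eqE /=.
by repeat (case: eqP => /= ?); rewrite ?ltnn; repeat (case: ltnP => /= ?); lia.
Qed.

Lemma wE0 (x y a b : 'I_n) : ~~ (a < b)%N -> w x y (a, b) = 0.
Proof.
move=> hab; move: hab; rewrite /w ffunE /= -!val_eqE /=.
by repeat (case: eqP => /= ?); rewrite ?ltnn; repeat (case: ltnP => /= ?); lia.
Qed.

End Aux2.
Section Aux3.
Variable n : nat.

Lemma mul_if1 (x : int) (c : bool) : x * (if c then 1 else 0) = if c then x else 0.
Proof. by case: c; rewrite ?mulr1 ?mulr0. Qed.

Lemma sumGw (G : 'I_n -> 'I_n -> int) (a b : 'I_n) : (a < b)%N ->
  \sum_y \sum_x G x y * w x y (a, b) = G a b - G b a.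
Proof.
move=> hab.
rewrite -(sum2_delta G a b) -(sum2_delta G b a) -sumrB; apply: eq_bigr => y _.
rewrite -sumrB; apply: eq_bigr => x _.
by rewrite wE // mulrBr !mul_if1.
Qed.

Lemma A_T (tau : 'S_n) (I J : {set 'I_n}) : is_split I J ->
  A tau I J = T (fun x => kap J (tau^-1%g x)).
Proof.
move=> HS; apply/ffunP => -[a b].
rewrite /A /T !ffunE /= !sum_ffunE.
have key : forall X : 'I_n -> int,
    \sum_(i in I) X i - \sum_(i in J) X i = \sum_i eps I J i * X i.
  move=> X; rewrite (big_mkcond (mem I)) (big_mkcond (mem J)) -sumrB.
  apply: eq_bigr => i _; rewrite /eps; have [_ H2] := split_mem i HS; move: H2.
  by case: (boolP (i \in I)) => h1; case: (boolP (i \in J)) => h2 //= _; rewrite ?h1 ?h2 ?(negbTE h1) ?(negbTE h2) ?mul1r ?mulN1r ?mul0r ?subr0 ?sub0r.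
under eq_bigr do rewrite sum_ffunE.
under [X in _ - X]eq_bigr do rewrite sum_ffunE.
rewrite key.
case: ifP => hab; last first.
  by apply: big1 => i _; rewrite big1 ?mulr0 // => l _; rewrite wE0 ?hab.
pose G x y := eps I J (tau^-1%g y) * (if (tau^-1%g x < tau^-1%g y)%N then 1 else 0).
transitivity (\sum_y \sum_x G x y * w x y (a, b)).
  rewrite (reindex_inj (@perm_inj _ tau^-1%g)); apply: eq_bigr => y _ /=.
  rewrite big_mkcond mulr_sumr (reindex_inj (@perm_inj _ tau^-1%g)); apply: eq_bigr => x _ /=.
  rewrite /G !permKV; by case: ifP; rewrite ?mulr1 ?mulr0 ?mul0r.
rewrite sumGw // /G.
apply: sign_lemma => //.
by apply: contraTneq hab => /perm_inj ->; rewrite ltnn.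
Qed.
End Aux3.
Section Aux4.
Variable n : nat.
Implicit Types (f g : 'I_n -> int) (p : 'S_n).

Lemma T_order f g : injective f -> injective g -> T f = T g ->
  forall x y, (f x < f y) = (g x < g y).
Proof.
move=> injf injg H.
have H1 : forall x y : 'I_n, (x < y)%N -> (f x < f y) = (g x < g y).
  move=> x y hxy; move/ffunP: H => /(_ (x, y)); rewrite !ffunE /= hxy.
  by case: ifP; case: ifP => //= _ _ /eqP; rewrite -subr_eq0 //.
move=> x y; case: (ltngtP x y) => hxy; first exact: H1.
  have Hx : x != y by rewrite neq_ltn hxy orbT.
  have Hf : f x != f y by apply: contra Hx => /eqP /injf ->.
  have Hg : g x != g y by apply: contra Hx => /eqP /injg ->.
  have := H1 _ _ hxy.
  case: (ltgtP (f x) (f y)) Hf => //= _ _; case: (ltgtP (g x) (g y)) Hg => //.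
by move/val_inj: hxy => ->; rewrite !ltxx.
Qed.

Lemma order_T f g : (forall x y, (f x < f y) = (g x < g y)) -> T f = T g.
Proof. by move=> H; apply/ffunP => -[x y]; rewrite !ffunE /= H. Qed.

Lemma kap_inj (J : {set 'I_n}) : injective (kap J).
Proof.
move=> x y; rewrite /kap => H; apply: ord_inj; move: H.
case: (boolP (x \in J)); case: (boolP (y \in J)) => _ _; lia.
Qed.

Lemma kap0 (k : 'I_n) : kap set0 k = (k : nat)%:Z.
Proof. by rewrite /kap inE. Qed.

Lemma split_full : is_split (I2n n) set0.
Proof. by split; rewrite ?setI0 ?setU0. Qed.

Lemma KEY (tau sigma : 'S_n) (I J : {set 'I_n}) : is_split I J ->
  (A tau I J = A sigma (I2n n) set0 <->
   forall x, rk (kap J) (tau^-1%g x) = sigma^-1%g x).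
Proof.
move=> HS; rewrite (A_T tau HS) (A_T sigma split_full).
have inj1 : injective (fun x => kap J (tau^-1%g x)).
  by move=> x y /kap_inj /perm_inj.
have inj2 : injective (fun x => kap set0 (sigma^-1%g x)).
  by move=> x y /kap_inj /perm_inj.
have E2 : forall x, rk (fun x => kap set0 (sigma^-1%g x)) x = sigma^-1%g x.
  move=> x; rewrite -(rk_perm (sigma^-1)%g x); apply: rk_ext => u v.
  by rewrite !kap0.
split.
  move=> H x; rewrite -rk_comp -E2; apply: rk_ext; exact: T_order H.
move=> H; apply: order_T => x y.
rewrite (rk_mono inj1) (rk_mono inj2) E2 E2 !rk_comp !H //.
Qed.

End Aux4.
Section Aux5.
Variable n : nat.

Lemma rk_kap0 (J : {set 'I_n}) (z : 'I_n) : (z : nat) = 0%N ->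
  (forall k, k \in J -> (0 < k)%N) -> rk (kap J) z = #|J|.
Proof.
move=> hz HJ; rewrite /rk; apply: eq_card => k; rewrite !inE /kap.
have zJ : z \notin J by apply/negP => /HJ; rewrite hz.
rewrite (negbTE zJ) hz.
case: (boolP (k \in J)) => [/HJ|_]; lia.
Qed.

Lemma kap_case (m : 'I_n) (l : seq 'I_n) (u : 'I_n) :
  (1 <= m)%N -> (forall x, x \in l -> (m < x)%N) ->
  let J' := [set x in l] in let J := [set x in m :: l] in
  [\/ [/\ (u : nat) = 0%N, kap J' u = 0 & kap J (C m u) = - ((m : nat)%:Z)],
      [/\ (1 <= u <= m)%N, kap J' u = (u : nat)%:Z & kap J (C m u) = (u : nat)%:Z - 1] |
      [/\ (m < u)%N, kap J (C m u) = kap J' u &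
         ((m : nat)%:Z < kap J' u \/ kap J' u < - ((m : nat)%:Z))]].
Proof.
move=> hm Hl J' J.
have mJ : m \in J by rewrite !inE eqxx.
have memJ : forall x, (x \in J) = (x == m) || (x \in l) by move=> x; rewrite !inE.
have memJ' : forall x, (x \in J') = (x \in l) by move=> x; rewrite !inE.
rewrite /C permE /cycf.
case: eqP => hu0.
  apply: Or31; split => //.
    by rewrite /kap memJ' hu0; case: ifP => _; lia.
  by rewrite /kap mJ.
case: ifP => hum.
  apply: Or32; split.
  - by apply/andP; split => //; lia.
  - rewrite /kap memJ'; case: (boolP (u \in l)) => // /Hl; lia.
  - rewrite /kap memJ /=; case: (boolP (_ == m)) => [/eqP/(congr1 val)/=|_]; first by lia.
    case: (boolP (_ \in l)) => [/Hl /=|_ /=]; lia.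
apply: Or33; split.
- lia.
- rewrite /kap memJ memJ'; case: (boolP (u == m)) => [/eqP/(congr1 val)/=|_ //]; lia.
- rewrite /kap memJ'; case: (boolP (u \in l)) => [/Hl|_]; lia.
Qed.

Lemma Cinvs_rk (l : seq 'I_n) : sorted ltn (map val l) -> all (fun m : 'I_n => (1 <= m)%N) l ->
  forall k, (Cinvs l k : nat) = rk (kap [set m in l]) k.
Proof.
elim: l => [|m l IH] /=.
  move=> _ _ k; transitivity (rk (fun y => (((1%g : 'S_n) y) : nat)%:Z) k); first by rewrite rk_perm.
  apply: rk_ext => x y.
  by rewrite /kap !inE !perm1.
move=> Hs /andP [hm Hall] k.
have := Hs; rewrite (path_sortedE ltn_trans) => /andP [Hm Hs'].
have Hl : forall x, x \in l -> (m < x)%N.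
  by move=> x xl; move/allP: Hm; apply; apply: map_f.
rewrite /permc permM (IH Hs' Hall).
rewrite -{2}(permKV (C m) k); set u := ((C m)^-1)%g k.
rewrite -(rk_comp (kap [set x in m :: l]) (C m) u).
apply: rk_ext => x y.
by case: (kap_case x hm Hl) => -[hx1 hx2 hx3]; case: (kap_case y hm Hl) => -[hy1 hy2 hy3];
  rewrite ?hx2 ?hx3 ?hy2 ?hy3; lia.
Qed.

End Aux5.
Lemma rk_kap_set0 n (y : 'I_n) : rk (kap set0) y = y.
Proof.
transitivity (rk (fun y => (((1%g : 'S_n) y) : nat)%:Z) y); last by rewrite rk_perm perm1.
by apply: rk_ext => a b; rewrite !kap0 !perm1.
Qed.
Lemma HJ_of n (I J : {set 'I_n}) : is_split I J -> forall k, k \in J -> (0 < k)%N.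
Proof.
move=> HS k kJ; have [H1 _] := split_mem k HS; by rewrite -H1 kJ orbT.
Qed.

Lemma fix0 n (s : 'S_n) (z : 'I_n) : inS1 s -> (z : nat) = 0%N -> s^-1%g z = z.
Proof.
move=> Hs hz; have E : s z = z by apply: val_inj; rewrite /= Hs.
by rewrite -{1}E permK.
Qed.

Local Close Scope ring_scope.

Theorem lemma3p4 (n : nat) (Hn : (2 <= n)%N) :
  (* (1) *)
  (forall (tau : 'S_n) (I J : {set 'I_n}),
      inS1 tau -> is_split I J ->
      exists sigma : 'S_n, A sigma (I2n n) set0 = A tau I J)
  /\
  (* (2) *)
  (forall sigma : 'S_n, inS1 sigma ->
     forall (tau : 'S_n) (I J : {set 'I_n}),
       (inS1 tau /\ is_split I J /\ A tau I J = A sigma (I2n n) set0) <->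
       (tau = sigma /\ I = I2n n /\ J = set0))
  /\
  (* (3) *)
  (forall (i : 'I_n) (rho : 'S_n), (1 <= i)%N -> inS1 rho ->
     let sigma := permc rho (tperm (Ordinal (leq_ltn_trans (leq0n i) (ltn_ord i))) i) in
     forall (tau : 'S_n) (I J : {set 'I_n}),
       (inS1 tau /\ is_split I J /\ A tau I J = A sigma (I2n n) set0) <->
       (exists l : seq 'I_n,
          size l = nat_of_ord i /\
          all (fun m : 'I_n => (1 <= m)%N) l /\
          sorted ltn (map (@nat_of_ord n) l) /\
          tau = permc sigma (Cinvs l) /\
          I = I2n n :\: [set m in l] /\
          J = [set m in l])).
Proof.
have n0 : (0 < n)%N by apply: leq_trans Hn.
set z : 'I_n := Ordinal n0.
split.
  move=> tau I J _ HS.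
  pose f := fun x => kap J (tau^-1%g x).
  have injf : injective f by move=> x y /kap_inj /perm_inj.
  pose g := fun x => Ordinal (rk_lt f x).
  have injg : injective g by move=> x y /(congr1 val) /= /(rk_inj injf).
  exists (perm injg)^-1%g; apply/esym/(KEY _ _ HS) => x.
  by rewrite invgK -(rk_comp (kap J) tau^-1%g x) permE.
split.
  move=> sigma Hs tau I J; split; last first.
    by case=> -> [-> ->]; split => //; split => //; exact: split_full.
  case=> Ht [HS /(KEY _ _ HS) H].
  have HJ := HJ_of HS.
  have J0 : J = set0.
    apply: cards0_eq; move: (H z); rewrite !fix0 // rk_kap0 //.
  move: H HS; rewrite J0 => H [_ HU]; rewrite setU0 in HU.
  split => //; apply: invg_inj; apply/permP => x; apply: val_inj.
  by move: (H x); rewrite rk_kap_set0.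
move=> i rho hi Hrho sigma tau I J.
set z' := Ordinal (leq_ltn_trans (leq0n i) (ltn_ord i)) in sigma *.
have zz : z' = z by apply: val_inj.
have si : sigma i = z.
  by apply: val_inj; rewrite /sigma /permc permM tpermR /= Hrho // zz.
have siz : sigma^-1%g z = i by rewrite -si permK.
split.
  case=> Ht [HS /(KEY _ _ HS) H].
  have HJ := HJ_of HS.
  have cJ : #|J| = i.
    by move: (H z); rewrite (fix0 Ht) // rk_kap0 // siz.
  set l := sort (fun x y : 'I_n => (x <= y)%N) (enum J).
  have lJ : [set m in l] = J by apply/setP => x; rewrite inE mem_sort mem_enum.
  exists l; split; first by rewrite size_sort -cardE.
  split; first by apply/allP => x; rewrite mem_sort mem_enum => /HJ.
  have Hsort : sorted ltn (map (@nat_of_ord n) l).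
    rewrite ltn_sorted_uniq_leq (map_inj_uniq val_inj) sort_uniq enum_uniq /=.
    rewrite sorted_map; apply: sort_sorted => x y; exact: leq_total.
  split => //.
  have Hall : all (fun m : 'I_n => (1 <= m)%N) l.
    by apply/allP => x; rewrite mem_sort mem_enum => /HJ.
  split.
    apply/permP => x; rewrite /permc permM.
    have E : Cinvs l x = sigma^-1%g (tau x).
      by apply: val_inj; rewrite /= Cinvs_rk // lJ -H permK.
    by rewrite E permKV.
  rewrite lJ; split => //.
  apply/setP => x; have [H1 H2] := split_mem x HS; move: H1 H2.
  rewrite !inE; case: (x \in I); case: (x \in J) => //= <- //.
case=> l [Hsz [Hall [Hsort [-> [-> ->]]]]].
set J0 := [set m in l].
have HJ : forall k, k \in J0 -> (0 < k)%N by move=> k; rewrite inE => /(allP Hall).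
have ul : uniq l.
  by rewrite -(map_inj_uniq val_inj); apply: (sorted_uniq ltn_trans ltnn).
have HS : is_split (I2n n :\: J0) J0.
  split; apply/setP => x; rewrite !inE; case: (boolP (x \in l)) => xl /=.
  all: rewrite ?andbF ?orbT ?(allP Hall x xl) ?orbF. all: try done.
split.
  move=> k hk; have -> : k = z by apply: val_inj.
  rewrite /permc permM.
  have -> : Cinvs l z = i.
    by apply: val_inj; rewrite /= Cinvs_rk // rk_kap0 // cardsE (card_uniqP ul).
  by rewrite si.
split => //; apply/(KEY _ _ HS) => x.
set y := ((permc sigma (Cinvs l))^-1)%g x.
have -> : x = (permc sigma (Cinvs l)) y by rewrite /y permKV.
by rewrite /permc permM permK -Cinvs_rk.
Qed.
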